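(* Let $G=(V,E)$ be a bispanning graph, $G'=(V',E')\subseteq G$ a subgraph which is itself bispanning, and $\overline{G}=(\overline V,\overline E)=G/G'$. (i) If $E=S\,\dot\cup\,T$ with $S,T$ disjoint spanning trees of $G$, then $S\cap E'$ and $T\cap E'$ are disjoint spanning trees of $G'$, and $S\cap\overline E$ and $T\cap\overline E$ are disjoint spanning trees of $\overline G$. (ii) If $S',T'$ are two disjoint spanning trees of $G'$ and $\overline S,\overline T$ are two disjoint spanning trees of $\overline G$, then $S'\,\dot\cup\,\overline S$ and $T'\,\dot\cup\,\overline T$ are two disjoint spanning trees of $G$.
   Context: Graphs are finite, undirected, may have parallel edges, no loops. A spanning tree of $H$ is an edge set $T$ such that $(V(H),T)$ is connected and acyclic; $H$ is bispanning if its edge set is the union of two disjoint spanning trees. The contraction $G/G'$ replaces all vertices of $V'$ by one new vertex, deletes all edges with both ends in $V'$, and makes every other edge with an end in $V'$ incident to the new vertex; its edges are identified with the corresponding edges of $G$. *)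

(* Defs.v *)
(* Multigraphs inside ambient finite types:
   V = type of vertices, E = type of edge names, ends : E -> V * V gives the
   two endpoints of each edge (parallel edges allowed: distinct edge names
   may have the same ends). *)
From mathcomp Require Import all_boot.
Set Implicit Arguments. Unset Strict Implicit. Unset Printing Implicit Defensive.

Section Graphs.
Variables (V E : finType) (ends : E -> V * V).

Definition joins (e : E) (x y : V) : bool :=
  (ends e == (x, y)) || (ends e == (y, x)).

Definition is_graph (VS : {set V}) (ES : {set E}) : Prop :=
  forall e, e \in ES ->
    [/\ (ends e).1 \in VS, (ends e).2 \in VS & (ends e).1 != (ends e).2].

Definition adj (T : {set E}) : rel V :=
  fun x y => [exists e in T, joins e x y].

Definition connected (VS : {set V}) (T : {set E}) : Prop :=
  VS != set0 /\
  forall x y, x \in VS -> y \in VS -> connect (adj T) x y.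

(* a cycle of length k.+1 in T: distinct edges es i, distinct vertices vs i,
   es i joining vs i and vs (i+1 mod k.+1).  (Length 2 = parallel edges.) *)
Definition has_cycle (T : {set E}) : Prop :=
  exists (k : nat) (es : 'I_k.+1 -> E) (vs : 'I_k.+1 -> V),
    [/\ injective es, injective vs &
        forall i, es i \in T /\ joins (es i) (vs i) (vs (ordS i))].

Definition acyclic (T : {set E}) : Prop := ~ has_cycle T.

Definition spanning_tree (VS : {set V}) (ES : {set E}) (T : {set E}) : Prop :=
  [/\ T \subset ES, connected VS T & acyclic T].

Definition bispanning (VS : {set V}) (ES : {set E}) : Prop :=
  is_graph VS ES /\
  exists S T : {set E},
    [/\ spanning_tree VS ES S, spanning_tree VS ES T,
        [disjoint S & T] & S :|: T = ES].

End Graphs.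

(* Contraction G / G' where G' has vertex set V': vertices of V' become the
   single new vertex None, other vertices v become Some v; edges with both
   ends in V' are deleted, the other edges keep their names. *)
Section Contraction.
Variables (V E : finType) (ends : E -> V * V) (V' : {set V}).

Definition cvert (v : V) : option V := if v \in V' then None else Some v.

Definition cends (e : E) : option V * option V :=
  (cvert (ends e).1, cvert (ends e).2).

Definition cverts (VS : {set V}) : {set option V} :=
  None |: (Some @: (VS :\: V')).

Definition cedges (ES : {set E}) : {set E} :=
  ES :\: [set e | ((ends e).1 \in V') && ((ends e).2 \in V')].

End Contraction.

(* Main.v *)
Require Import Defs.
From mathcomp Require Import all_boot.
From mathcomp Require Import zify.
Set Implicit Arguments. Unset Strict Implicit. Unset Printing Implicit Defensive.

Section Theory.
Variables (V E : finType) (ends : E -> V * V).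

Local Notation adj := (adj ends).
Local Notation joins := (joins ends).

Lemma joinsC e x y : joins e x y = joins e y x.
Proof. by rewrite /joins orbC. Qed.

Lemma adjC (T : {set E}) : symmetric (adj T).
Proof. by move=> x y; apply/existsP/existsP=> [][f /andP[fT j]]; exists f; rewrite fT -joinsC. Qed.

Lemma csym (T : {set E}) : connect_sym (adj T).
Proof. exact: sym_connect_sym (adjC T). Qed.

Lemma adj_sub (T T2 : {set E}) x y : T \subset T2 -> adj T x y -> adj T2 x y.
Proof. move=> s /existsP[f /andP[fT j]]; apply/existsP; exists f; by rewrite (subsetP s). Qed.

Lemma connect_subs (T T2 : {set E}) x y : T \subset T2 -> connect (adj T) x y -> connect (adj T2) x y.
Proof. move=> s; apply: connect_sub => u w h; apply: connect1; exact: adj_sub h. Qed.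

Definition cls (T : {set E}) x := [set y | connect (adj T) x y].
Definition comps (T : {set E}) := (cls T) @: [set: V].
Definition nc (T : {set E}) := #|comps T|.

Lemma cls_eq T x y : connect (adj T) x y -> cls T x = cls T y.
Proof.
move=> h; apply/setP=> z; rewrite !inE; apply/idP/idP=> h2.
  by apply: connect_trans h2; rewrite csym.
exact: connect_trans h2.
Qed.

Lemma in_cls T x : x \in cls T x.
Proof. by rewrite inE connect0. Qed.

Lemma connect_add (T : {set E}) e x y :
  let a := (ends e).1 in let b := (ends e).2 in
  connect (adj (e |: T)) x y =
  [|| connect (adj T) x y, connect (adj T) x a && connect (adj T) b y
     | connect (adj T) x b && connect (adj T) a y].
Proof.
move=> a b; apply/idP/idP.
  case/connectP=> p hp ->; elim: p x hp => [|z p IH] x /=.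
    by rewrite connect0.
  case/andP=> hxz /IH {IH}.
  have [hT|] := boolP (adj T x z).
    have cxz := connect1 hT.
    case/or3P=> [h|/andP[h1 h2]|/andP[h1 h2]].
    - by rewrite (connect_trans cxz h).
    - by rewrite (connect_trans cxz h1) h2 orbT.
    - by rewrite (connect_trans cxz h1) h2 !orbT.
  move: hxz => /existsP[f /andP[]]; rewrite !inE => /orP[/eqP->|fT] jf hn; last first.
    by case/negP: hn; apply/existsP; exists f; rewrite fT.
  have [[xa zb]|[xb za]] : (x = a /\ z = b) \/ (x = b /\ z = a).
  - by move: jf; rewrite /joins /a /b; case: (ends e) => u w /orP[] /eqP[-> ->]; [left|right].
  - rewrite xa zb; case/or3P=> [h|/andP[h1 h2]|/andP[h1 h2]].
    + by rewrite connect0 h orbT.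
    + by rewrite connect0 h2 orbT.
    + by rewrite h2.
  - rewrite xb za; case/or3P=> [h|/andP[h1 h2]|/andP[h1 h2]].
    + by rewrite connect0 h !orbT.
    + by rewrite h2.
    + by rewrite connect0 h2 !orbT.
have sT : T \subset e |: T by apply: subsetUr.
have cab : connect (adj (e |: T)) a b.
  apply: connect1; apply/existsP; exists e; rewrite !inE eqxx /= /joins.
  by rewrite /a /b; case: (ends e) => u w; rewrite eqxx.
have cba : connect (adj (e |: T)) b a by rewrite csym.
case/or3P=> [h|/andP[h1 h2]|/andP[h1 h2]].
- exact: connect_subs h.
- apply: connect_trans (connect_subs sT h1) _; exact: connect_trans cab (connect_subs sT h2).
- apply: connect_trans (connect_subs sT h1) _; exact: connect_trans cba (connect_subs sT h2).
Qed.


Lemma nc_set0 : nc set0 = #|V|.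
Proof.
rewrite /nc /comps card_in_imset ?cardsT // => x y _ _ h.
have : y \in cls set0 x by rewrite h in_cls.
rewrite inE => /connectP[[|z p] /=]; first by move=> _ ->.
by case/andP=> /existsP[f]; rewrite inE.
Qed.

Lemma nc_add1 (T : {set E}) e :
  connect (adj T) (ends e).1 (ends e).2 -> nc (e |: T) = nc T.
Proof.
move=> cab; rewrite /nc; suff -> : comps (e |: T) = comps T by []; rewrite /comps; apply: eq_imset => x; apply/setP=> y; rewrite !inE connect_add.
apply/idP/idP; last by move->.
case/or3P=> [//|/andP[h1 h2]|/andP[h1 h2]].
  exact: connect_trans h1 (connect_trans cab h2).
apply: connect_trans h1 (connect_trans _ h2); by rewrite csym.
Qed.

Lemma nc_add2 (T : {set E}) e :
  ~~ connect (adj T) (ends e).1 (ends e).2 -> nc T = (nc (e |: T)).+1.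
Proof.
set a := (ends e).1; set b := (ends e).2 => nab.
set Ca := cls T a; set Cb := cls T b.
pose f (C : {set V}) := if (a \in C) || (b \in C) then Ca :|: Cb else C.
have clsE x : cls (e |: T) x = f (cls T x).
  apply/setP=> y; rewrite /f !inE connect_add -/a -/b.
  have [xa|nxa] := boolP (connect (adj T) x a).
    rewrite /= !inE.
    apply/idP/idP=> [/or3P[h|h|/andP[h1 h2]]|/orP[h|h]].
    - by apply/orP; left; apply: connect_trans h; rewrite csym.
    - by rewrite h orbT.
    - by rewrite h2.
    - by rewrite (connect_trans xa h).
    - by rewrite h orbT.
  have [xb|nxb] := boolP (connect (adj T) x b).
    rewrite /= !inE.
    apply/idP/idP=> [/orP[h|h]|/orP[h|h]].
    - by apply/orP; right; apply: connect_trans h; rewrite csym.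
    - by rewrite h.
    - by rewrite h orbT.
    - by rewrite (connect_trans xb h).
  by rewrite /= inE ?orbF.
have cE : comps (e |: T) = f @: comps T.
  by rewrite /comps -imset_comp; apply: eq_imset => x /=; rewrite clsE.
have CaX : Ca \in comps T by apply: imset_f; rewrite inE.
have CbX : Cb \in comps T by apply: imset_f; rewrite inE.
have CaCb : Ca != Cb.
  apply/eqP=> h; case/negP: nab; have : b \in Cb by apply: in_cls.
  by rewrite -h inE.
have fCb : f Cb = f Ca by rewrite /f in_cls in_cls orbT.
have e2 : f @: comps T = f @: (comps T :\ Cb).
  apply/eqP; rewrite eqEsubset [X in _ && X]imsetS ?subD1set // andbT.
  apply/subsetP=> _ /imsetP[C CX ->].
  have [->|ne] := eqVneq C Cb; first by rewrite fCb; apply: imset_f; rewrite in_setD1 CaCb CaX.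
  by apply: imset_f; rewrite in_setD1 ne CX.
rewrite /nc cE e2 card_in_imset; first by rewrite (cardsD1 Cb) CbX.
have key C : C \in comps T -> (a \in C) || (b \in C) -> (C = Ca) \/ (C = Cb).
  case/imsetP=> x _ -> /orP[h|h]; [left|right]; apply: cls_eq; by rewrite inE in h.
have aCb : a \notin Cb.
  by rewrite inE csym.
move=> C D; rewrite !in_setD1 => /andP[nCb CX] /andP[nDb DX]; rewrite /f.
have aC : a \in Ca by apply: in_cls.
have bC : b \in Cb by apply: in_cls.
case: ifP => hC; case: ifP => hD.
- move=> _; case: (key _ CX hC) => [->|h]; last by rewrite h eqxx in nCb.
  by case: (key _ DX hD) => [->|h]; last by rewrite h eqxx in nDb.
- move=> h; move: hD; by rewrite -h in_setU aC.
- move=> h; move: hC; by rewrite h in_setU aC.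
- by [].
Qed.


Local Notation has_cycle := (has_cycle ends).
Local Notation acyclic := (acyclic ends).
Local Notation connected := (connected ends).

Lemma joins_ends e u w : joins e u w ->
  ((ends e).1 = u /\ (ends e).2 = w) \/ ((ends e).1 = w /\ (ends e).2 = u).
Proof. by rewrite /joins; case: (ends e) => p q /orP[] /eqP[-> ->]; [left|right]. Qed.

Lemma joins_self e : joins e (ends e).1 (ends e).2.
Proof. by rewrite /joins; case: (ends e) => p q; rewrite eqxx. Qed.

Lemma cyc_conn (T : {set E}) : has_cycle T ->
  exists2 e, e \in T & connect (adj (T :\ e)) (ends e).1 (ends e).2.
Proof.
case=> k [es [vs [ies ivs hc]]].
set e := es ord_max; exists e; first by case: (hc ord_max).
have step i : i < k -> connect (adj (T :\ e)) (vs ord0) (vs (inord i)) ->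
    connect (adj (T :\ e)) (vs ord0) (vs (inord i.+1)).
  move=> ik h; apply: connect_trans h _; apply: connect1.
  have [inT jn] := hc (inord i).
  have -> : (inord i.+1 : 'I_k.+1) = ordS (inord i).
    by apply: val_inj; rewrite /= !inordK ?modn_small ?ltnS ?(ltnW ik).
  apply/existsP; exists (es (inord i)); rewrite jn andbT !inE inT andbT.
  apply/eqP=> /ies /(congr1 val) /=; rewrite inordK; last by rewrite ltnS ltnW.
  move=> ek.
  by rewrite ek ltnn in ik.
have all i : i <= k -> connect (adj (T :\ e)) (vs ord0) (vs (inord i)).
  elim: i => [|i IH] ik.
    by rewrite (_ : inord 0 = ord0) ?connect0 //; apply: val_inj; rewrite /= inordK.
  by apply: step ik (IH (ltnW ik)).
have c0k : connect (adj (T :\ e)) (vs ord0) (vs ord_max).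
  by rewrite (_ : ord_max = inord k) ?all //; apply: val_inj; rewrite /= inordK.
have [_ jn] := hc ord_max.
have e0 : ordS (@ord_max k) = ord0 by apply: val_inj; rewrite /= modnn.
rewrite e0 in jn.
case/joins_ends: jn => [[-> ->]|[-> ->]] //; by rewrite csym.
Qed.

Definition ch (T : {set E}) (d : E) x y := odflt d [pick f in T | joins f x y].

Lemma chP (T : {set E}) d x y : adj T x y -> ch T d x y \in T /\ joins (ch T d x y) x y.
Proof.
rewrite /ch; case: pickP => [f /andP[] //|h /existsP[f /andP[fT jf]]].
by move: (h f); rewrite fT jf.
Qed.

Lemma path_cyc (T : {set E}) e : e \notin T ->
  connect (adj T) (ends e).2 (ends e).1 -> has_cycle (e |: T).
Proof.
set a := (ends e).1; set b := (ends e).2 => eT.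
have [ab|nab] := eqVneq a b.
  move=> _; exists 0, (fun _ => e), (fun _ => a); split.
  - by move=> i j _; rewrite (ord1 i) (ord1 j).
  - by move=> i j _; rewrite (ord1 i) (ord1 j).
  move=> i /=; rewrite setU11; split=> //.
  by have := joins_self e; rewrite -/a -/b -ab.
case/connectP=> p0 hp0 lst.
move: lst; case: (shortenP hp0) => p hp up _ lst {hp0 p0}.
set m := size p.
have m0 : 0 < m by move: nab; rewrite lst /m; case: (p) => //=; rewrite eqxx.
pose v (i : nat) := nth b (b :: p) i.
have vm : v m = a by rewrite /v lst -last_nth.
have vadj i : i < m -> adj T (v i) (v i.+1) by move=> im; move/(pathP b): hp; apply.
pose es (i : 'I_m.+1) := if i < m then ch T e (v i) (v i.+1) else e.
exists m, es, (fun i => v i); split.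
- move=> i j; rewrite /es.
  have vinj x y : x < m.+1 -> y < m.+1 -> v x = v y -> x = y.
    by move=> xm ym /eqP; rewrite /v nth_uniq // => /eqP.
  case: ifP => im; case: ifP => jm.
  + move=> h; have [_ ji] := chP e (vadj _ im); have [_ jj] := chP e (vadj _ jm).
    rewrite h in ji; apply: val_inj.
    have bi : i < m.+1 by rewrite ltnS ltnW.
    have bj : j < m.+1 by rewrite ltnS ltnW.
    have bi1 : i.+1 < m.+1 by rewrite ltnS.
    have bj1 : j.+1 < m.+1 by rewrite ltnS.
    case/joins_ends: ji => [[h1 h2]|[h1 h2]]; case/joins_ends: jj => [[h3 h4]|[h3 h4]].
    * exact: vinj _ _ bi bj (etrans (esym h1) h3).
    * have e1 := vinj _ _ bi bj1 (etrans (esym h1) h3).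
      have e2 := vinj _ _ bi1 bj (etrans (esym h2) h4). lia.
    * have e1 := vinj _ _ bi1 bj (etrans (esym h1) h3).
      have e2 := vinj _ _ bi bj1 (etrans (esym h2) h4). lia.
    * exact: vinj _ _ bi bj (etrans (esym h2) h4).
  + by move=> h; have [+ _] := chP e (vadj _ im); rewrite h (negPf eT).
  + by move=> h; have [+ _] := chP e (vadj _ jm); rewrite -h (negPf eT).
  + move=> _; apply: val_inj; have := ltn_ord i; have := ltn_ord j.
    move/negbT: im; move/negbT: jm; rewrite -!leqNgt /=; lia.
- by move=> i j /eqP; rewrite /v nth_uniq // => /eqP /val_inj.
- move=> i; rewrite /es; case: ifP => im.
    have [h1 h2] := chP e (vadj _ im); split; first by rewrite setU1r.
    by rewrite (_ : (ordS i : nat) = i.+1) //= modn_small.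
  have iE : (i : nat) = m by have := ltn_ord i; move/negbT: im; rewrite -leqNgt; lia.
  have -> : (ordS i : nat) = 0 by rewrite /= iE modnn.
  rewrite iE.
  by rewrite setU11 vm /v /= /a /b; split=> //; exact: joins_self.
Qed.


Lemma cycle_sub (T T2 : {set E}) : T \subset T2 -> has_cycle T -> has_cycle T2.
Proof.
move=> s [k [es [vs [h1 h2 h3]]]]; exists k, es, vs; split=> // i.
by have [a b] := h3 i; split=> //; apply: (subsetP s).
Qed.

Lemma acyclic_sub (T T2 : {set E}) : T \subset T2 -> acyclic T2 -> acyclic T.
Proof. by move=> s h c; apply: h; exact: cycle_sub s c. Qed.

Lemma K12 n : forall T : {set E}, #|T| = n ->
  #|V| <= #|T| + nc T /\ (acyclic T -> #|T| + nc T = #|V|).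
Proof.
elim: n => [|n IH] T hT.
  move/eqP: hT; rewrite cards_eq0 => /eqP ->; rewrite cards0 nc_set0; by split.
have : 0 < #|T| by rewrite hT.
rewrite card_gt0 => /set0Pn[e eT].
set T' := T :\ e.
have TE : T = e |: T' by rewrite setD1K.
have cT : #|T| = #|T'|.+1 by rewrite (cardsD1 e T) eT.
have [IH1 IH2] := IH T' ltac:(by move: hT; rewrite cT => -[]).
have eT' : e \notin T' by rewrite !inE eqxx.
have [cab|ncab] := boolP (connect (adj T') (ends e).1 (ends e).2).
  rewrite TE nc_add1 // -TE cT; split; first by rewrite addSn ltnW // ltnS.
  move=> ac; exfalso; apply: ac; rewrite TE; apply: path_cyc => //; by rewrite csym.
have h := nc_add2 ncab; rewrite -TE in h.
rewrite cT addSn -addnS -h; split => // ac; apply: IH2.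
by apply: acyclic_sub ac; apply: subD1set.
Qed.

Lemma K1 (T : {set E}) : #|V| <= #|T| + nc T.
Proof. by have [] := K12 (erefl #|T|). Qed.

Lemma K2 (T : {set E}) : acyclic T -> #|T| + nc T = #|V|.
Proof. by have [] := K12 (erefl #|T|). Qed.

Lemma K3 (T : {set E}) : has_cycle T -> #|V| < #|T| + nc T.
Proof.
case/cyc_conn=> e eT cab.
have TE : T = e |: (T :\ e) by rewrite setD1K.
have cT : #|T| = #|T :\ e|.+1 by rewrite (cardsD1 e T) eT.
by rewrite TE nc_add1 // -TE cT addSn ltnS K1.
Qed.


Definition inside (VS : {set V}) (T : {set E}) :=
  forall e, e \in T -> (ends e).1 \in VS /\ (ends e).2 \in VS.

Lemma adj_inside VS T x y : inside VS T -> adj T x y -> x \in VS /\ y \in VS.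
Proof.
move=> hi /existsP[f /andP[fT jf]]; have [h1 h2] := hi f fT.
by case/joins_ends: jf => [[<- <-]|[<- <-]].
Qed.

Lemma cls_out VS T x : inside VS T -> x \notin VS -> cls T x = [set x].
Proof.
move=> hi xV; apply/setP=> y; rewrite !inE; apply/idP/idP; last by move/eqP->; exact: connect0.
case/connectP=> [[|z p] /=]; first by move=> _ ->.
case/andP=> /(adj_inside hi) [h _]; by rewrite (negPf xV) in h.
Qed.

Lemma ncVS VS T : inside VS T -> nc T = #|~: VS| + #|cls T @: VS|.
Proof.
move=> hi; rewrite /nc /comps -(setUCr VS) imsetU cardsU.
have -> : (cls T @: VS) :&: (cls T @: ~: VS) = set0.
  apply/setP=> C; rewrite in_setI in_set0; apply/negbTE/andP=> -[/imsetP[y yV ->] /imsetP[x]].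
  rewrite inE => xV; rewrite (cls_out hi xV) => h.
  by move: (in_cls T y); rewrite h inE => /eqP hy; rewrite hy (negPf xV) in yV.
rewrite cards0 subn0 addnC card_in_imset //.
move=> x y; rewrite !inE => xV yV; rewrite (cls_out hi xV) (cls_out hi yV) => /setP /(_ y).
by rewrite !inE eqxx => /eqP.
Qed.

Lemma cls_ge1 VS T : VS != set0 -> 0 < #|cls T @: VS|.
Proof. by case/set0Pn=> x xV; rewrite card_gt0; apply/set0Pn; exists (cls T x); apply: imset_f. Qed.

Lemma conn_iff VS T : VS != set0 -> (connected VS T <-> #|cls T @: VS| = 1).
Proof.
move=> ne; split.
  case=> _ hc; case/set0Pn: (ne) => x0 x0V; apply/eqP/cards1P; exists (cls T x0).
  apply/setP=> C; rewrite !inE; apply/imsetP/eqP=> [[y yV ->]|->]; last by exists x0.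
  by apply: esym; apply: cls_eq; apply: hc.
move/eqP/cards1P=> [C0 hC]; split=> // x y xV yV.
have hx : cls T x \in cls T @: VS by apply: imset_f.
have hy : cls T y \in cls T @: VS by apply: imset_f.
rewrite hC !inE in hx hy; move: (in_cls T y); rewrite (eqP hy) -(eqP hx) inE //.
Qed.

Lemma tree_card VS T : inside VS T -> connected VS T -> acyclic T -> #|T|.+1 = #|VS|.
Proof.
move=> hi hc ac; have := K2 ac; rewrite (ncVS hi) (proj1 (conn_iff _ (proj1 hc)) hc).
have := cardsC VS; lia.
Qed.

Lemma acyc_lt VS T : inside VS T -> VS != set0 -> acyclic T -> #|T| < #|VS|.
Proof.
move=> hi ne ac; have := K2 ac; rewrite (ncVS hi); have := cls_ge1 T ne.
have := cardsC VS; lia.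
Qed.

Lemma acyc_conn VS T : inside VS T -> VS != set0 -> acyclic T -> #|T|.+1 = #|VS| ->
  connected VS T.
Proof.
move=> hi ne ac hc; apply/(conn_iff _ ne); have := K2 ac; rewrite (ncVS hi).
have := cardsC VS; lia.
Qed.

Lemma conn_acyc VS T : inside VS T -> connected VS T -> #|T| < #|VS| -> acyclic T.
Proof.
move=> hi hc lt cy; have := K3 cy; rewrite (ncVS hi) (proj1 (conn_iff _ (proj1 hc)) hc).
have := cardsC VS; lia.
Qed.

End Theory.

Lemma dis_of (T : finType) (A B : {set T}) :
  (forall x, x \in A -> x \in B -> False) -> [disjoint A & B].
Proof.
move=> h; rewrite -setI_eq0; apply/eqP/setP=> x; rewrite in_setI in_set0.
by apply/negbTE/andP=> -[/h].
Qed.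

Lemma card_dis (T : finType) (A B : {set T}) :
  [disjoint A & B] -> #|A :|: B| = #|A| + #|B|.
Proof. by move=> d; rewrite cardsU (disjoint_setI0 d) cards0 subn0. Qed.

Section Contr.
Variables (V E : finType) (ends : E -> V * V) (VS : {set V}) (ES : {set E})
  (V' : {set V}).

Local Notation cv := (cvert V').
Local Notation ce := (cends ends V').
Local Notation CV := (cverts V' VS).
Local Notation CE := (cedges ends V' ES).

Lemma graph_inside (T : {set E}) : is_graph ends VS ES -> T \subset ES -> inside ends VS T.
Proof. by move=> hg s e /(subsetP s) /hg []. Qed.

Lemma cv_in x : x \in VS -> cv x \in CV.
Proof.
move=> xV; rewrite /cvert /cverts; case: ifP => xV'; first by rewrite setU11.
by rewrite setU1r //; apply: imset_f; rewrite inE xV' xV.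
Qed.

Lemma cv_pre u : V' \subset VS -> V' != set0 -> u \in CV -> exists2 x, x \in VS & cv x = u.
Proof.
move=> s /set0Pn[v0 v0V] ; rewrite !inE => /orP[/eqP->|/imsetP[x]].
  by exists v0; [exact: (subsetP s)|rewrite /cvert v0V].
by rewrite !inE => /andP[xV' xV] ->; exists x => //; rewrite /cvert (negPf xV').
Qed.

Lemma cinside (T : {set E}) : is_graph ends VS ES -> T \subset CE -> inside ce CV T.
Proof.
move=> hg s e /(subsetP s); rewrite in_setD => /andP[_ eE]; have [h1 h2 _] := hg e eE.
by split; [exact: (cv_in h1)|exact: (cv_in h2)].
Qed.

Lemma card_cverts : V' \subset VS -> #|CV| = (#|VS| - #|V'|).+1.
Proof.
move=> s; rewrite /cverts cardsU1 card_imset; last by move=> x y [].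
rewrite cardsD (setIidPr s).
suff -> : None \notin [set Some x | x in VS :\: V'] by [].
by apply/imsetP=> -[].
Qed.

Lemma in_cedges e : e \in CE = (e \in ES) && ~~ (((ends e).1 \in V') && ((ends e).2 \in V')).
Proof. by rewrite /cedges !inE andbC. Qed.

Lemma proj (T : {set E}) x y : T \subset ES -> connect (adj ends T) x y ->
  connect (adj ce (T :&: CE)) (cv x) (cv y).
Proof.
move=> s /connectP[p hp ->]; elim: p x hp => [|z p IH] x /=; first by rewrite connect0.
case/andP=> hxz /IH; apply: connect_trans.
case/existsP: hxz => f /andP[fT jf].
have [xV'|nx] := boolP (x \in V'); have [zV'|nz] := boolP (z \in V').
- by rewrite /cvert xV' zV' connect0.
all: apply: connect1; apply/existsP; exists f; rewrite inE fT in_cedges (subsetP s) //=.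
all: case/joins_ends: jf => [[h1 h2]|[h1 h2]]; rewrite h1 h2 ?xV' ?zV' ?(negPf nx) ?(negPf nz) /=;
  rewrite /joins /cends h1 h2 eqxx ?orbT //.
Qed.

Lemma lift_conn (S' Sb : {set E}) (v0 : V) :
  is_graph ends VS ES -> v0 \in V' -> connected ends V' S' -> Sb \subset CE ->
  let lift u := if u is Some v then v else v0 in
  forall u w, connect (adj ce Sb) u w -> connect (adj ends (S' :|: Sb)) (lift u) (lift w).
Proof.
move=> hg v0V [_ hc] sb lift.
have sS : S' \subset S' :|: Sb by apply: subsetUl.
have sB : Sb \subset S' :|: Sb by apply: subsetUr.
have base p : connect (adj ends (S' :|: Sb)) (lift (cv p)) p.
  rewrite /cvert; case: ifP => pV /=; last exact: connect0.
  by apply: connect_subs sS _; apply: hc.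
have step u w : adj ce Sb u w -> connect (adj ends (S' :|: Sb)) (lift u) (lift w).
  case/existsP=> f /andP[fS jf].
  have pq : connect (adj ends (S' :|: Sb)) (ends f).1 (ends f).2.
    apply: connect1; apply/existsP; exists f; rewrite (subsetP sB) //; exact: joins_self.
  have key : connect (adj ends (S' :|: Sb)) (lift (cv (ends f).1)) (lift (cv (ends f).2)).
    apply: connect_trans (base _) _; apply: connect_trans pq _; rewrite csym; exact: base.
  case/joins_ends: jf => [[<- <-]|[<- <-]] //; by rewrite csym.
move=> u w /connectP[p hp ->]; elim: p u hp => [|z p IH] u /=; first by rewrite connect0.
by case/andP=> /step h /IH; apply: connect_trans.
Qed.

End Contr.

Section MainProof.
Variables (V E : finType) (ends : E -> V * V)
    (VS : {set V}) (ES : {set E}) (V' : {set V}) (E' : {set E}).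
Hypotheses (hg : is_graph ends VS ES) (sV : V' \subset VS) (sE : E' \subset ES)
  (hg' : is_graph ends V' E') (ne' : V' != set0).

Local Notation CV := (cverts V' VS).
Local Notation CE := (cedges ends V' ES).
Local Notation ce := (cends ends V').

Lemma neVS : VS != set0.
Proof. case/set0Pn: ne' => x xV; apply/set0Pn; exists x; exact: (subsetP sV). Qed.

Lemma E'_CE : [disjoint E' & CE].
Proof.
apply: dis_of => e eE; rewrite in_cedges; have [h1 h2 _] := hg' eE.
by rewrite h1 h2 andbF.
Qed.

Lemma CE_sub : CE \subset ES.
Proof. exact: subsetDl. Qed.

Lemma part1 (S : {set E}) : spanning_tree ends VS ES S -> #|S :&: E'|.+1 = #|V'| ->
  spanning_tree ends V' E' (S :&: E') /\ spanning_tree ce CV CE (S :&: CE).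
Proof.
case=> sS cS aS c1.
have in1 : inside ends V' (S :&: E') by apply: graph_inside hg' (subsetIr _ _).
have ac1 : acyclic ends (S :&: E') by apply: acyclic_sub aS; exact: subsetIl.
split; first by split; [exact: subsetIr| exact: acyc_conn | ].
have claim e : e \in S -> (ends e).1 \in V' -> (ends e).2 \in V' -> e \in E'.
  move=> eS h1 h2; case eE: (e \in E') => //.
  have ac2 : acyclic ends (e |: (S :&: E')).
    by apply: acyclic_sub aS; rewrite subUset sub1set eS subsetIl.
  have in2 : inside ends V' (e |: (S :&: E')).
    by move=> f; rewrite in_setU1 => /orP[/eqP->|/in1].
  have := acyc_lt in2 ne' ac2; rewrite cardsU1 in_setI eS eE /= -c1; lia.
have SCE : S :&: CE = S :\: E'.
  apply/setP=> e; rewrite in_setI in_setD in_cedges; case eS: (e \in S) => //=; rewrite ?andbF //.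
  rewrite (subsetP sS) //=; case eE: (e \in E').
    by have [h1 h2 _] := hg' eE; rewrite h1 h2.
  by apply/negP=> /andP[h1 h2]; rewrite (claim e eS h1 h2) in eE.
have cS' := tree_card (graph_inside hg sS) cS aS.
have cV := card_cverts sV.
have le := subset_leq_card sV.
have sc : #|S :&: CE|.+1 = #|CV| by rewrite SCE cardsD cV; lia.
have inc : inside ce CV (S :&: CE) by apply: cinside hg (subsetIr _ _).
have ccon : connected ce CV (S :&: CE).
  split; first by apply/set0Pn; exists None; rewrite setU11.
  move=> u w /(cv_pre sV ne') [x xV <-] /(cv_pre sV ne') [y yV <-].
  apply: proj sS _; exact: (proj2 cS).
split; [exact: subsetIr | exact: ccon | ].
by apply: conn_acyc inc ccon _; rewrite -sc.
Qed.

Lemma part2 (S' Sb : {set E}) : spanning_tree ends V' E' S' -> spanning_tree ce CV CE Sb ->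
  [disjoint S' & Sb] /\ spanning_tree ends VS ES (S' :|: Sb).
Proof.
case=> s1 c1 a1 [s2 c2 a2].
have dis : [disjoint S' & Sb].
  apply: dis_of => e e1 e2; have := E'_CE; rewrite -setI_eq0 => /eqP/setP/(_ e).
  by rewrite in_setI in_set0 (subsetP s1) // (subsetP s2).
split=> //.
have sU : S' :|: Sb \subset ES by rewrite subUset (subset_trans s1 sE) (subset_trans s2 CE_sub).
have inU := graph_inside hg sU.
case/set0Pn: (ne') => v0 v0V.
have cU : connected ends VS (S' :|: Sb).
  split; first exact: neVS.
  have base x : x \in VS -> connect (adj ends (S' :|: Sb)) x (if cvert V' x is Some v then v else v0).
    rewrite /cvert; case: ifP => xV' _ /=; last exact: connect0.
    by apply: connect_subs (subsetUl _ _) _; apply: (proj2 c1).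
  move=> x y xV yV.
  have := lift_conn hg v0V c1 s2 (proj2 c2 _ _ (cv_in V' xV) (cv_in V' yV)).
  move=> h; apply: connect_trans (base _ xV) _; apply: connect_trans h _.
  by rewrite csym; apply: base.
split => //; apply: conn_acyc inU cU _.
have t1 := tree_card (graph_inside hg' s1) c1 a1.
have t2 := tree_card (cinside hg s2) c2 a2.
rewrite card_cverts // in t2.
have le := subset_leq_card sV.
rewrite card_dis //; lia.
Qed.

End MainProof.

Lemma st_sub (V E : finType) (ends : E -> V * V) VS ES T :
  spanning_tree ends VS ES T -> T \subset ES.
Proof. by case. Qed.
Lemma st_conn (V E : finType) (ends : E -> V * V) VS ES T :
  spanning_tree ends VS ES T -> connected ends VS T.
Proof. by case. Qed.
Lemma st_acyc (V E : finType) (ends : E -> V * V) VS ES T :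
  spanning_tree ends VS ES T -> acyclic ends T.
Proof. by case. Qed.

Theorem mainTheorem18 (V E : finType) (ends : E -> V * V)
    (VS : {set V}) (ES : {set E}) (V' : {set V}) (E' : {set E}) :
  bispanning ends VS ES ->
  V' \subset VS -> E' \subset ES ->
  bispanning ends V' E' ->
  (* (i) *)
  (forall S T : {set E},
     spanning_tree ends VS ES S -> spanning_tree ends VS ES T ->
     [disjoint S & T] -> S :|: T = ES ->
     [/\ spanning_tree ends V' E' (S :&: E'),
         spanning_tree ends V' E' (T :&: E') &
         [disjoint S :&: E' & T :&: E']] /\
     [/\ spanning_tree (cends ends V') (cverts V' VS) (cedges ends V' ES)
           (S :&: cedges ends V' ES),
         spanning_tree (cends ends V') (cverts V' VS) (cedges ends V' ES)
           (T :&: cedges ends V' ES) &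
         [disjoint S :&: cedges ends V' ES & T :&: cedges ends V' ES]])
  /\
  (* (ii) *)
  (forall S' T' Sb Tb : {set E},
     spanning_tree ends V' E' S' -> spanning_tree ends V' E' T' ->
     [disjoint S' & T'] ->
     spanning_tree (cends ends V') (cverts V' VS) (cedges ends V' ES) Sb ->
     spanning_tree (cends ends V') (cverts V' VS) (cedges ends V' ES) Tb ->
     [disjoint Sb & Tb] ->
     [/\ [disjoint S' & Sb], [disjoint T' & Tb],
         spanning_tree ends VS ES (S' :|: Sb),
         spanning_tree ends VS ES (T' :|: Tb) &
         [disjoint S' :|: Sb & T' :|: Tb]]).
Proof.
move=> [hg _] sV sE [hg' [S0 [T0 [tS0 tT0 d0 u0]]]].
have ne' : V' != set0 by case: tS0 => _ [].
have cS0 := tree_card (graph_inside hg' (st_sub tS0)) (st_conn tS0) (st_acyc tS0).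
have cT0 := tree_card (graph_inside hg' (st_sub tT0)) (st_conn tT0) (st_acyc tT0).
have cE' : #|E'| = #|S0| + #|T0| by rewrite -u0 card_dis.
have disI (A B X : {set E}) : [disjoint A & B] -> [disjoint A :&: X & B :&: X].
  move=> d; apply: dis_of => e; rewrite !in_setI => /andP[eA _] /andP[eB _].
  by rewrite (disjointFr d eA) in eB.
split.
  move=> S T tS tT dST uST.
  have inS : inside ends V' (S :&: E') by apply: graph_inside hg' (subsetIr _ _).
  have inT : inside ends V' (T :&: E') by apply: graph_inside hg' (subsetIr _ _).
  have lS := acyc_lt inS ne' (acyclic_sub (subsetIl _ _) (st_acyc tS)).
  have lT := acyc_lt inT ne' (acyclic_sub (subsetIl _ _) (st_acyc tT)).
  have sm : #|S :&: E'| + #|T :&: E'| = #|E'|.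
    by rewrite -card_dis ?disI // -setIUl uST (setIidPr sE).
  have eS : #|S :&: E'|.+1 = #|V'| by lia.
  have [hS1 hS2] := part1 hg sV sE hg' ne' tS eS.
  have eT : #|T :&: E'|.+1 = #|V'| by lia.
  have [hT1 hT2] := part1 hg sV sE hg' ne' tT eT.
  by split; split => //; apply: disI.
move=> S' T' Sb Tb tS' tT' dST' tSb tTb dSTb.
have [d1 h1] := part2 hg sV sE hg' ne' tS' tSb.
have [d2 h2] := part2 hg sV sE hg' ne' tT' tTb.
split => //.
have ECE : [disjoint E' & cedges ends V' ES] by apply: E'_CE.
apply: dis_of => e; rewrite !in_setU => /orP[eA|eA] /orP[eB|eB].
- by rewrite (disjointFr dST' eA) in eB.
- have := disjointFr ECE (subsetP (st_sub tS') _ eA); by rewrite (subsetP (st_sub tTb) _ eB).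
- have := disjointFr ECE (subsetP (st_sub tT') _ eB); by rewrite (subsetP (st_sub tSb) _ eA).
- by rewrite (disjointFr dSTb eA) in eB.
Qed.
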